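(* Let $\mathcal{G}$ be a connected $k$-uniform hypergraph with $n$ vertices. Then for every $j\in V(\mathcal{G})$, \[ {\rm ecc}(j)\geq \frac{k}{2(k-1)(n-1)\alpha_j(\mathcal{G})}. \]
   Context: A $k$-uniform hypergraph $\mathcal{G}$ has vertex set $V(\mathcal{G})=[n]$ and edge set $E(\mathcal{G})$ of $k$-element subsets of $V(\mathcal{G})$. A path of length $l$ is an alternating sequence $v_0e_1v_1\cdots e_lv_l$ of distinct vertices and distinct edges with $v_{i-1},v_i\in e_i$; $\mathcal{G}$ is connected if any two vertices are joined by a path. The distance $d(u,v)$ is the length of a shortest path between $u$ and $v$, and ${\rm ecc}(v)=\max_{u\in V(\mathcal{G})}d(u,v)$. For $\mathbf{x}\in\mathbb{R}^n$, $\mathcal{L}_\mathcal{G}\mathbf{x}^k=\sum_{\{i_1,\ldots,i_k\}\in E(\mathcal{G})}\left(x_{i_1}^k+\cdots+x_{i_k}^k-k\,x_{i_1}\cdots x_{i_k}\right)$, and the inverse Perron value of vertex $j$ is $\alpha_j(\mathcal{G})=\min\{\mathcal{L}_\mathcal{G}\mathbf{x}^k : \mathbf{x}\in\mathbb{R}^n_+,\ \sum_{i=1}^n x_i^k=1,\ x_j=0\}$. *)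

(* Defs.v *)
From HB Require Import structures.
From mathcomp Require Import all_boot all_order all_algebra.
From mathcomp Require Import boolp classical_sets reals.
Set Implicit Arguments. Unset Strict Implicit. Unset Printing Implicit Defensive.
Import Order.TTheory GRing.Theory Num.Theory.
Local Open Scope classical_set_scope.
Local Open Scope ring_scope.

Definition k_uniform (n k : nat) (E : {set {set 'I_n}}) : Prop :=
  forall e, e \in E -> #|e| = k.

(* A path of length l = size es from u to v: an alternating sequence
   v_0 e_1 v_1 ... e_l v_l (vs = [v_0;...;v_l], es = [e_1;...;e_l]) of
   distinct vertices and distinct edges of E with v_{i-1}, v_i \in e_i.
   (The default x0 of nth is irrelevant since all indices are in range.) *)
Definition is_hpath (n : nat) (E : {set {set 'I_n}})
    (vs : seq 'I_n) (es : seq {set 'I_n}) : Prop :=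
  [/\ size vs = (size es).+1, uniq vs, uniq es,
      all (fun e => e \in E) es &
      forall (x0 : 'I_n) (i : nat), (i < size es)%N ->
        (nth x0 vs i \in nth finset.set0 es i) /\ (nth x0 vs i.+1 \in nth finset.set0 es i)].

Definition has_path_len (n : nat) (E : {set {set 'I_n}}) (u v : 'I_n) (l : nat)
  : Prop :=
  exists vs es, [/\ is_hpath E vs es, size es = l,
                    head u vs = u & last u vs = v].

Definition hconnected (n : nat) (E : {set {set 'I_n}}) : Prop :=
  forall u v : 'I_n, exists l, has_path_len E u v l.

(* d(u,v): the length of a shortest path between u and v (0 if none exists,
   which never happens for connected hypergraphs). *)
Definition hdist (n : nat) (E : {set {set 'I_n}}) (u v : 'I_n) : nat :=
  match pselect (exists l, `[< has_path_len E u v l >]) with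
  | left H => ex_minn H
  | right _ => 0%N
  end.

Definition ecc (n : nat) (E : {set {set 'I_n}}) (v : 'I_n) : nat :=
  \max_(u : 'I_n) hdist E u v.

Definition lapform {R : realType} (n k : nat) (E : {set {set 'I_n}})
    (x : 'I_n -> R) : R :=
  \sum_(e in E) (\sum_(i in e) x i ^+ k - k%:R * \prod_(i in e) x i).

(* alpha_j(G) = min { L_G x^k : x in R^n_+, sum x_i^k = 1, x_j = 0 };
   the minimum is attained (compact feasible set), so it equals the infimum. *)
Definition alpha {R : realType} (n k : nat) (E : {set {set 'I_n}}) (j : 'I_n)
  : R :=
  inf [set lapform k E x | x in
        [set x : 'I_n -> R | (forall i, 0 <= x i) /\
                             \sum_i x i ^+ k = 1 /\ x j = 0]].

(* Main.v *)
Require Import Defs.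
From HB Require Import structures.
From mathcomp Require Import all_boot all_order all_algebra.
From mathcomp Require Import boolp classical_sets reals.
From mathcomp Require Import ring lra.
Import Order.TTheory GRing.Theory Num.Theory.
Local Open Scope ring_scope.
Set Implicit Arguments. Unset Strict Implicit.
Lemma amgm (R : realType) n k (e : {set 'I_n}) (z : 'I_n -> R) :
  (0 < k)%N -> #|e| = k -> (forall i, 0 <= z i) ->
  k%:R * \prod_(i in e) z i <= \sum_(i in e) z i ^+ k.
Proof.
move=> k0 ek z0.
have := leif_AGM (A := mem e) (E := fun i => z i ^+ k) (fun i _ => exprn_ge0 k (z0 i)).
move=> /leif_le H; rewrite ek in H.
rewrite prodrXl in H.
have kR : 0 < k%:R :> R by rewrite ltr0n.
rewrite -ler_pdivlMl //.
rewrite -(ler_pXn2r k0) ?nnegrE //.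
- by rewrite mulrC; case: H.
- by apply: prodr_ge0 => i _.
- by apply: mulr_ge0; [rewrite invr_ge0 ltW | apply: sumr_ge0 => i _; apply: exprn_ge0].
Qed.
Lemma sqrtX (R : realType) (t : R) k : 0 <= t -> Num.sqrt t ^+ k = Num.sqrt (t ^+ k).
Proof.
move=> t0.
have h : t ^+ k = (Num.sqrt t ^+ k) ^+ 2 by rewrite -exprM mulnC exprM sqr_sqrtr.
by rewrite h sqrtr_sqr ger0_norm // exprn_ge0 // sqrtr_ge0.
Qed.

Lemma edge_bound (R : realType) n k (e : {set 'I_n}) (x : 'I_n -> R) a b :
  (0 < k)%N -> #|e| = k -> (forall i, 0 <= x i) -> a \in e -> b \in e ->
  (Num.sqrt (x a ^+ k) - Num.sqrt (x b ^+ k)) ^+ 2 <=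
  \sum_(i in e) x i ^+ k - k%:R * \prod_(i in e) x i.
Proof.
move=> k0 ek x0 ae be.
case: (eqVneq a b) => [<-|ab].
  by rewrite subrr expr0n /= subr_ge0 (amgm (R:=R)).
pose s := Num.sqrt (x a * x b).
pose z i := if (i == a) || (i == b) then s else x i.
have z0 i : 0 <= z i by rewrite /z; case: ifP => _; rewrite ?sqrtr_ge0.
have := amgm k0 ek z0.
have bea : (b \in e) && (b != a) by rewrite be eq_sym ab.
rewrite [X in _ * X <= _](bigD1 a) //= [X in _ * (_ * X) <= _](bigD1 b) //=.
rewrite [X in _ <= X](bigD1 a) //= [X in _ <= _ + X](bigD1 b) //=.
rewrite [X in _ <= X - _](bigD1 a) //= [X in _ <= _ + X - _](bigD1 b) //=.
rewrite [X in _ <= _ - _ * X](bigD1 a) //= [X in _ <= _ - _ * (_ * X)](bigD1 b) //=.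
have eqP1 : \prod_(i | (i \in e) && (i != a) && (i != b)) z i =
            \prod_(i | (i \in e) && (i != a) && (i != b)) x i.
  by apply: eq_bigr => i /andP[/andP[_ /negbTE Ha] /negbTE Hb]; rewrite /z Ha Hb.
have eqS1 : \sum_(i | (i \in e) && (i != a) && (i != b)) z i ^+ k =
            \sum_(i | (i \in e) && (i != a) && (i != b)) x i ^+ k.
  by apply: eq_bigr => i /andP[/andP[_ /negbTE Ha] /negbTE Hb]; rewrite /z Ha Hb.
rewrite eqP1 eqS1 /z eqxx /= eqxx orbT.
have zz : s * s = x a * x b by rewrite -expr2 sqr_sqrtr // mulr_ge0.
have sk : s ^+ k = Num.sqrt (x a ^+ k) * Num.sqrt (x b ^+ k).
  by rewrite sqrtX ?mulr_ge0 // exprMn sqrtrM // exprn_ge0.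
rewrite !mulrA -(mulrA _ s s) zz sk.
set P := \prod_(_ | _) _. set S := \sum_(_ | _) _.
set ya := Num.sqrt (x a ^+ k). set yb := Num.sqrt (x b ^+ k).
have ya2 : ya ^+ 2 = x a ^+ k by rewrite sqr_sqrtr // exprn_ge0.
have yb2 : yb ^+ 2 = x b ^+ k by rewrite sqr_sqrtr // exprn_ge0.
rewrite -ya2 -yb2 => H.
rewrite !mulrA in H *.
nra.
Qed.

Lemma cs_nat (R : realType) (F : nat -> R) d :
  (\sum_(0 <= i < d) F i) ^+ 2 <= d%:R * \sum_(0 <= i < d) F i ^+ 2.
Proof.
elim: d => [|d IH]; first by rewrite !big_nil expr0n mul0r.
rewrite !big_nat_recr //=.
set S := \sum_(0 <= i < d) F i in IH *. set Q := \sum_(0 <= i < d) F i ^+ 2 in IH *.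
have Q0 : 0 <= Q by apply: sumr_ge0 => i _; apply: sqr_ge0.
have D0 : 0 <= d%:R :> R by apply: ler0n.
rewrite -natr1.
have key : 0 <= d%:R * (Q + d%:R * F d ^+ 2 - 2 * F d * S).
  have h : d%:R * (Q + d%:R * F d ^+ 2 - 2 * F d * S) =
           (d%:R * Q - S ^+ 2) + (S - F d * d%:R) ^+ 2 by ring.
  by rewrite h addr_ge0 ?subr_ge0 ?sqr_ge0.
have t : 0 <= Q + d%:R * F d ^+ 2 - 2 * F d * S.
  have [dz|dp] := eqVneq (d%:R : R) 0.
    move: IH; rewrite dz mul0r => IH.
    have -> : S = 0 by apply/eqP; rewrite -sqrf_eq0 eq_le IH sqr_ge0.
    by rewrite !mul0r mulr0 addr0 subr0.
  have dp' : 0 < d%:R :> R by rewrite lt0r dp D0.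
  by rewrite -(pmulr_rge0 _ dp').
nra.
Qed.

Lemma path_bound (R : realType) n k (E : {set {set 'I_n}}) (x : 'I_n -> R) u j d :
  (0 < k)%N -> k_uniform k E -> (forall i, 0 <= x i) -> has_path_len E u j d ->
  (Num.sqrt (x j ^+ k) - Num.sqrt (x u ^+ k)) ^+ 2 <= d%:R * lapform k E x.
Proof.
move=> k0 kE x0 [vs [es [[Hs Hvu Heu Hall Hnth] Hd Hh Hl]]].
pose y i := Num.sqrt (x i ^+ k).
pose g (e : {set 'I_n}) := \sum_(i in e) x i ^+ k - k%:R * \prod_(i in e) x i.
have g0 e : e \in E -> 0 <= g e.
  by move=> eE; rewrite subr_ge0 amgm // kE.
pose f i := y (nth u vs i).
have tel : y j - y u = \sum_(0 <= i < d) (f i.+1 - f i).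
  rewrite telescope_sumr // /f nth0 Hh -Hd.
  by rewrite -[X in nth _ _ X]/((size es).+1.-1) -Hs nth_last Hl.
rewrite tel.
apply: le_trans (cs_nat _ _) _.
apply: ler_wpM2l; first exact: ler0n.
have step1 : \sum_(0 <= i < d) (f i.+1 - f i) ^+ 2 <= \sum_(0 <= i < d) g (nth finset.set0 es i).
  apply: ler_sum_nat => i /andP[_ id].
  have [h1 h2] := Hnth u i (eq_ind_r (fun m => (i < m)%N) id Hd).
  have ee : nth finset.set0 es i \in E by apply: (allP Hall); rewrite mem_nth // Hd.
  rewrite /f /y /g.
  by apply: edge_bound => //; apply: kE.
apply: le_trans step1 _.
have eqn : \sum_(e <- es) g e = \sum_(0 <= i < size es) g (nth finset.set0 es i) by rewrite (big_nth finset.set0).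
rewrite -Hd -eqn.
rewrite big_uniq //= /lapform -/g.
rewrite [X in _ <= X](bigID (fun e => e \in es)) /=.
rewrite -[X in X <= _]addr0 lerD //.
  rewrite le_eqVlt; apply/orP; left; apply/eqP; apply: eq_bigl => e.
  by case: (boolP (e \in es)) => h; rewrite ?andbF ?andbT //; rewrite (allP Hall).
by apply: sumr_ge0 => e /andP[eE _]; apply: g0.
Qed.

Lemma hdist_path n (E : {set {set 'I_n}}) u v :
  hconnected E -> has_path_len E u v (hdist E u v).
Proof.
move=> conn; rewrite /hdist; case: pselect => [H|H].
  by case: ex_minnP => m /asboolP.
exfalso; apply: H; have [l hl] := conn u v; exists l; exact/asboolP.
Qed.

Lemma lap_ge0 (R : realType) n k (E : {set {set 'I_n}}) (x : 'I_n -> R) :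
  (0 < k)%N -> k_uniform k E -> (forall i, 0 <= x i) -> 0 <= lapform k E x.
Proof.
move=> k0 kE x0; apply: sumr_ge0 => e eE.
by rewrite subr_ge0 amgm // kE.
Qed.

Lemma key (R : realType) n k (E : {set {set 'I_n}}) (x : 'I_n -> R) j :
  (0 < k)%N -> k_uniform k E -> hconnected E ->
  (forall i, 0 <= x i) -> \sum_i x i ^+ k = 1 -> x j = 0 ->
  1 <= (n.-1)%:R * (ecc E j)%:R * lapform k E x.
Proof.
move=> k0 kE conn x0 xs xj.
have L0 := lap_ge0 k0 kE x0.
have each i : x i ^+ k <= (ecc E j)%:R * lapform k E x.
  have := path_bound k0 kE x0 (hdist_path i j conn).
  rewrite xj expr0n (gtn_eqF k0) sqrtr0 sub0r sqrrN sqr_sqrtr ?exprn_ge0 // => h.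
  apply: le_trans h _; apply: ler_wpM2r => //.
  by rewrite ler_nat /ecc (leq_bigmax i).
have hs : \sum_i x i ^+ k <= (n.-1)%:R * ((ecc E j)%:R * lapform k E x).
  rewrite (bigD1 j) //= xj expr0n (gtn_eqF k0) add0r.
  apply: le_trans (ler_sum _ (fun i _ => each i)) _.
  rewrite sumr_const mulr_natl.
  have -> : #|[pred i | i != j]| = n.-1 by have := cardC1 j; rewrite card_ord => <-.
  by rewrite mulr_natl.
by rewrite xs mulrA in hs.
Qed.

Theorem theorem3p4 (R : realType) (n k : nat) (E : {set {set 'I_n}}) :
  (2 <= k)%N -> k_uniform k E -> hconnected E ->
  forall j : 'I_n,
    k%:R / (2 * (k.-1)%:R * (n.-1)%:R * alpha (R:=R) k E j) <= (ecc E j)%:R :> R.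
Proof.
move=> k2 kE conn j.
have k0 : (0 < k)%N by apply: leq_trans k2.
case: (leqP n 1) => n1.
  have -> : n.-1 = 0%N by move: n1; case: (n) => [|[|]].
  by rewrite mulr0 mul0r invr0 mulr0 ler0n.
have : (0 < #|[pred i | i != j]|)%N.
  have := cardC1 j; rewrite card_ord => ->; by rewrite -ltnS prednK // ltnW.
case/card_gt0P => i0; rewrite inE => i0j.
pose x1 : 'I_n -> R := fun i => if i == i0 then 1 else 0.
have x1f : (forall i, 0 <= x1 i) /\ \sum_i x1 i ^+ k = 1 /\ x1 j = 0.
  split; first by move=> i; rewrite /x1; case: ifP.
  split; last by rewrite /x1 eq_sym (negbTE i0j).
  rewrite (bigD1 i0) //= /x1 eqxx expr1n big1 ?addr0 // => i /negbTE ->.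
  by rewrite expr0n (gtn_eqF k0).
have [x1a [x1b x1c]] := x1f.
have h1 := key k0 kE conn x1a x1b x1c.
have Ep : (0 < (ecc E j)%:R :> R).
  rewrite ltr0n lt0n; apply/negP => /eqP e0.
  by move: h1; rewrite e0 mulr0 mul0r ler10.
have Np : (0 < (n.-1)%:R :> R) by rewrite ltr0n -ltnS prednK // ltnW.
pose c : R := ((n.-1)%:R * (ecc E j)%:R)^-1.
have cp : 0 < c by rewrite invr_gt0 mulr_gt0.
have ca : c <= alpha (R:=R) k E j.
  apply: lb_le_inf.
    by exists (lapform k E x1); exists x1.
  move=> z [x [xa [xb xc]] <-].
  rewrite /c -div1r ler_pdivrMr ?mulr_gt0 // mulrC.
  exact: key.
have ap : 0 < alpha (R:=R) k E j by apply: lt_le_trans ca.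
have K1 : (1 <= (k.-1)%:R :> R) by rewrite ler1n -ltnS prednK // ltnW.
have KK : k%:R = (k.-1)%:R + 1 :> R by rewrite natr1 prednK.
rewrite ler_pdivrMr; last by rewrite !mulr_gt0 // (lt_le_trans ltr01 K1).
have : 1 <= (n.-1)%:R * (ecc E j)%:R * alpha (R:=R) k E j.
  by move: ca; rewrite /c -div1r ler_pdivrMr ?mulr_gt0 // => h; nra.
rewrite KK; set A := alpha _ _ _; set N := (n.-1)%:R; set M := (ecc E j)%:R; set K := (k.-1)%:R.
move=> h; nra.
Qed.
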